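(* If $p$ is a prime number with $p\geq 7$, then \[ B^{(-p+3)}_{p-3}\equiv 0\pmod p. \]
   Context: For any integer $k$, let $\mathrm{Li}_k(t)=\sum_{n=1}^{\infty} t^n/n^k$. The poly-Bernoulli numbers $B^{(k)}_n$ ($n\ge 0$) are defined by $\frac{\mathrm{Li}_k(1-e^{-t})}{1-e^{-t}}=\sum_{n=0}^{\infty}B^{(k)}_n\frac{t^n}{n!}$. For negative upper index these are integers. *)

(* Defs.v *)
From HB Require Import structures.
From mathcomp Require Import all_boot all_order all_algebra.
Set Implicit Arguments. Unset Strict Implicit. Unset Printing Implicit Defensive.
Import Order.TTheory GRing.Theory Num.Theory.
Local Open Scope ring_scope.

Definition expneg_trunc (n : nat) : {poly rat} :=
  \poly_(i < n.+1) ((-1) ^+ i / (i`!)%:R).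

(* Poly-Bernoulli numbers, read off from the generating function
     Li_k(1 - e^{-t}) / (1 - e^{-t}) = sum_{m >= 0} (1 - e^{-t})^m / (m+1)^k
                                     = sum_n B_n^{(k)} t^n / n!.
   Since (1 - e^{-t})^m has t-adic valuation m, only m <= n contributes to the
   coefficient of t^n, and that coefficient only depends on the coefficients
   of e^{-t} up to degree n. *)
Definition polyBernoulli (k : int) (n : nat) : rat :=
  (n`!)%:R *
  (\sum_(m < n.+1) (((m.+1)%:R : rat) ^ (- k)) *: (1 - expneg_trunc n) ^+ m)`_n.

(* Main.v *)
Require Import Defs.
From HB Require Import structures.
From mathcomp Require Import all_boot all_order all_algebra all_field.
From mathcomp Require Import ring zify.
Import Order.TTheory GRing.Theory Num.Theory.
Local Open Scope ring_scope.

Lemma fact_neq0 i : (i`!)%:R != 0 :> rat.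
Proof. by rewrite pnatr_eq0 -lt0n fact_gt0. Qed.

Lemma coef_expE (n j i : nat) : (i <= n)%N ->
  ((expneg_trunc n)^+j)`_i = (-(j%:R : rat))^+i / (i`!)%:R.
Proof.
elim: j i => [|j IH] i hi.
  rewrite expr0 coef1 oppr0; case: i hi => [|i] _ /=; first by rewrite expr0 fact0 divr1.
  by rewrite expr0n mul0r.
rewrite exprS coefM.
have -> : - (j.+1%:R : rat) = - j%:R + -1 by rewrite -natr1 opprD.
rewrite exprDn mulr_suml.
apply: eq_bigr => [[k hk]] _ /=.
rewrite coef_poly (leq_ltn_trans (leq_trans _ hi) (ltnSn n)); last by rewrite -ltnS.
rewrite IH; last by rewrite (leq_trans (leq_subr _ _) hi).
have hki : (k <= i)%N by rewrite -ltnS.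
have hb := bin_fact hki.
have E : ('C(i, k)%:R : rat) = (i`!)%:R / ((k`!)%:R * ((i - k)`!)%:R).
  by rewrite -hb natrM natrM mulfK // mulf_neq0 // fact_neq0.
rewrite -[_ *+ 'C(i,k)]mulr_natr E.
field.
by rewrite !fact_neq0.
Qed.

Lemma coef_1mE (n m i : nat) : (i <= n)%N ->
  ((1 - expneg_trunc n)^+m)`_i =
  \sum_(j < m.+1) ((-1)^+j *+ 'C(m, j) * ((-(j%:R : rat))^+i / (i`!)%:R)).
Proof.
move=> hi.
rewrite exprDn coef_sum; apply: eq_bigr => [[j hj]] _ /=.
rewrite expr1n mul1r coefMn (exprNn (expneg_trunc n)).
rewrite -[(-1)^+j in LHS]signr_odd -[(-1)^+j in RHS]signr_odd.
case: (odd j); rewrite ?expr1 ?expr0 ?mulN1r ?mul1r ?coefN coef_expE //.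
  ring.
ring.
Qed.

Definition Bexpr (R : pzRingType) (n : nat) : R :=
  \sum_(m < n.+1) ((m.+1)%:R)^+n *
     \sum_(j < m.+1) ((-1)^+j *+ 'C(m, j) * (-(j%:R))^+n).

Lemma pB_eq (n : nat) : polyBernoulli (- (Posz n)) n = Bexpr rat n.
Proof.
rewrite /polyBernoulli /Bexpr coef_sum mulr_sumr; apply: eq_bigr => [[m hm]] _ /=.
rewrite opprK coefZ coef_1mE // mulrCA; congr (_ * _).
rewrite mulr_sumr; apply: eq_bigr => j _.
field; exact: fact_neq0.
Qed.

Lemma Bexpr_map (R S : pzRingType) (f : {rmorphism R -> S}) n :
  f (Bexpr R n) = Bexpr S n.
Proof.
rewrite /Bexpr rmorph_sum; apply: eq_bigr => m _.
rewrite rmorphM rmorphXn rmorph_nat rmorph_sum; congr (_ * _).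
apply: eq_bigr => j _.
by rewrite !(rmorphM, rmorphMn, rmorphXn, rmorphN, rmorph1, rmorph_nat).
Qed.

Section Fp.
Variable p : nat.
Hypothesis hp : prime p.
Local Notation K := 'F_p.

Lemma natK_neq0 i : (0 < i < p)%N -> (i%:R : K) != 0.
Proof.
move=> /andP[h0 hlt]; rewrite -(dvdn_pcharf (pchar_Fp hp)).
by apply/negP => /dvdn_leq => /(_ h0); rewrite leqNgt hlt.
Qed.

Lemma natK_p : (p%:R : K) = 0.
Proof. by apply/eqP; rewrite -(dvdn_pcharf (pchar_Fp hp)). Qed.

Lemma fermatK (x : K) : x != 0 -> x^+(p.-1) = 1.
Proof.
move=> hx; have := expf_card x; rewrite card_Fp // => h.
apply: (mulfI hx); rewrite -exprS prednK ?prime_gt0 //.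
by rewrite h mulr1.
Qed.

Definition beta (f : nat -> K) n := \sum_(k < n.+1) (-1)^+k *+ 'C(n, k) * f k.
Definition Mi (f : nat -> K) k := (k%:R)^-1 * f k.
Definition ginv e k : K := ((k%:R)^-1)^+e.
Definition Hs e n : K := \sum_(i < n.+1) ginv e i.

Lemma beta_S f n : beta f n.+1 =
  beta f n + \sum_(k < n.+1) (-1)^+k.+1 *+ 'C(n, k) * f k.+1.
Proof.
rewrite /beta big_ord_recl /=.
under eq_bigr do rewrite binS mulrnDr mulrDl.
rewrite big_split /= addrA.
have b0 : forall i, bump 0 i = i.+1 by [].
under eq_bigr do rewrite b0.
under [X in _ + X = _]eq_bigr do rewrite b0.
congr (_ + _).
rewrite [X in _ + X = _]big_ord_recr /= (@bin_small n n.+1) // mulr0n mul0r addr0.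
rewrite [in RHS]big_ord_recl /= !bin0.
by under [in RHS]eq_bigr do rewrite b0.
Qed.

Lemma beta_ext f g n : (forall k, (k <= n)%N -> f k = g k) -> beta f n = beta g n.
Proof. by move=> h; apply: eq_bigr => [[k hk]] _ /=; rewrite h. Qed.

Lemma betaB f g n : beta (fun k => f k - g k) n = beta f n - beta g n.
Proof. by rewrite /beta -sumrB; apply: eq_bigr => k _; rewrite mulrBr. Qed.

Lemma beta_shift f n : beta f n.+1 = beta f n - beta (fun k => f k.+1) n.
Proof.
rewrite beta_S /beta -sumrN; congr (_ + _); apply: eq_bigr => k _.
by rewrite exprS mulN1r mulNrn mulNr.
Qed.

Lemma beta_invol n : forall g, beta (beta g) n = g n.
Proof.
elim: n => [|n IH] g.
  by rewrite /beta !big_ord1 /= expr0 bin0 !mulr1n !mul1r.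
rewrite beta_shift.
rewrite (@beta_ext (fun k => beta g k.+1) (fun k => beta g k - beta (fun k => g k.+1) k)); last first.
  by move=> k _; rewrite beta_shift.
by rewrite betaB IH opprB addrC subrK IH.
Qed.


Lemma beta_Mi f n : f 0%N = 0 -> (n < p)%N ->
  beta (Mi f) n = \sum_(m < n.+1) (m%:R)^-1 * beta f m.
Proof.
move=> f0; elim: n => [|n IH] hn.
  by rewrite /beta !big_ord1 /= /Mi invr0 !mul0r mulr0.
rewrite beta_S IH ?(ltn_trans (ltnSn n)) // [in RHS]big_ord_recr /=; congr (_ + _).
rewrite /beta [in RHS]big_ord_recl /= f0 mulr0 add0r mulr_sumr.
apply: eq_bigr => [[k hk]] _ /=.
have b0 : bump 0 k = k.+1 by [].
rewrite b0.
have e : (n.+1%:R : K) * 'C(n, k)%:R = k.+1%:R * 'C(n.+1, k.+1)%:R.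
  by rewrite -!natrM mul_bin_diag.
have ha : (n.+1%:R : K) != 0 by rewrite natK_neq0.
have hb : (k.+1%:R : K) != 0 by rewrite natK_neq0 // (leq_ltn_trans hk).
have eC : ('C(n, k)%:R : K) = (n.+1%:R)^-1 * (k.+1%:R * 'C(n.+1, k.+1)%:R).
  by rewrite -e (mulKf ha).
rewrite /Mi -[_ *+ 'C(n, k)]mulr_natr -[_ *+ 'C(n.+1, k.+1)]mulr_natr eC.
field.
by rewrite -!mulrS ha hb.
Qed.
Lemma binpm1 k (x : K) : (k < p)%N -> (-1)^+k *+ 'C(p.-1, k) * x = x.
Proof.
elim: k => [|k IH] hk; first by rewrite expr0 bin0 mul1r.
have hp1 : p.-1.+1 = p by rewrite prednK // prime_gt0.
have hd : (('C(p, k.+1))%:R : K) = 0.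
  apply/eqP; rewrite -(dvdn_pcharf (pchar_Fp hp)) prime_dvd_bin //.
have e : ('C(p.-1, k.+1)%:R : K) = - 'C(p.-1, k)%:R.
  apply/eqP; rewrite -subr_eq0 opprK -natrD -binS hp1 hd eqxx //.
have IH' := IH (ltn_trans (ltnSn k) hk).
rewrite -mulr_natr e exprS mulN1r mulrNN mulr_natr IH' //.
Qed.

Lemma beta_last f : beta f p.-1 = \sum_(k < p.-1.+1) f k.
Proof.
rewrite /beta; apply: eq_bigr => [[k hk]] _ /=.
rewrite binpm1 //.
by rewrite -(prednK (prime_gt0 hp)).
Qed.


Lemma psum e : (0 < e < p.-1)%N -> \sum_(i < p.-1.+1) (i%:R : K)^+e = 0.
Proof.
elim/ltn_ind: e => e IH /andP[he0 hep].
have hq : p.-1.+1 = p by rewrite prednK // prime_gt0.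
have T : \sum_(i < p.-1.+1) (((i.+1)%:R : K)^+e.+1 - (i%:R)^+e.+1) = 0.
  rewrite -(big_mkord xpredT (fun i => ((i.+1)%:R : K)^+e.+1 - (i%:R)^+e.+1)).
  by rewrite telescope_sumr // hq natK_p !expr0n /= subrr.
have T2 : \sum_(i < p.-1.+1) (((i.+1)%:R : K)^+e.+1 - (i%:R)^+e.+1) =
    \sum_(t < e.+1) (\sum_(i < p.-1.+1) (i%:R : K)^+t) *+ 'C(e.+1, t).
  under eq_bigr do rewrite -natr1 exprD1n big_ord_recr /= binn mulr1n addrK.
  under [RHS]eq_bigr do rewrite -sumrMnl.
  by rewrite exchange_big.
move: T; rewrite T2 big_ord_recl /= sumr_const card_ord bin0 mulr1n.

have hK : ((p.-1.+1)%:R : K) = 0 by rewrite hq natK_p.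
rewrite hK add0r.
clear T2; case: e IH he0 hep => // e IH _ hep.
rewrite big_ord_recr /= big1 ?add0r; last first.
  move=> [i hi] _ /=.
  have b0 : bump 0 i = i.+1 by [].
  by rewrite b0 IH ?mul0rn // ltnS ?hi //= (ltn_trans _ hep).
have b0 : bump 0 e = e.+1 by [].
rewrite b0 binSn -mulr_natr => /eqP; rewrite mulf_eq0 => /orP[/eqP //|].
have hne : (e.+2%:R : K) != 0 by apply: natK_neq0; rewrite /= -hq ltnS.
by rewrite (negbTE hne).
Qed.

Lemma ginv0 e : (0 < e)%N -> ginv e 0 = 0.
Proof. by move=> he; rewrite /ginv invr0 expr0n; case: e he. Qed.

Lemma inv_pow (x : K) e : (0 < e < p.-1)%N -> (x^-1)^+e = x^+(p.-1 - e).
Proof.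
move=> /andP[he0 hlt].
case: (eqVneq x 0) => hx.
  rewrite hx invr0 !expr0n.
  have -> : (e == 0%N) = false by case: e he0 hlt.
  by have -> : (p.-1 - e == 0)%N = false by apply/negbTE; rewrite -lt0n subn_gt0.
apply: (mulIf (expf_neq0 e hx)).
by rewrite -exprMn mulVf // expr1n -exprD subnK ?fermatK // ltnW.
Qed.

Lemma psum_inv e : (0 < e < p.-1)%N -> Hs e p.-1 = 0.
Proof.
move=> he; rewrite /Hs.
have -> : \sum_(i < p.-1.+1) ginv e i = \sum_(i < p.-1.+1) (i%:R : K)^+(p.-1 - e).
  by apply: eq_bigr => i _; rewrite /ginv inv_pow.
apply: psum; lia.
Qed.


Lemma beta_pred g m : (m.+1 < p)%N ->
  beta g m = beta g m.+1 - (m.+1%:R)^-1 * beta (fun j => j%:R * g j) m.+1.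
Proof.
move=> hm.
have ha : (m.+1%:R : K) != 0 by rewrite natK_neq0.
rewrite /beta mulr_sumr -sumrB [in RHS]big_ord_recr /=.
rewrite binn mulr1n [_ * (_%:R * _)]mulrCA (mulKf ha) subrr addr0.
apply: eq_bigr => [[i hi]] _ /=.
have e : (m.+1%:R : K) * 'C(m, i)%:R = (m.+1%:R - i%:R) * 'C(m.+1, i)%:R.
  by rewrite -natrB ?(ltnW hi) // -!natrM mul_bin_down.
have eC : ('C(m, i)%:R : K) = (m.+1%:R)^-1 * ((m.+1%:R - i%:R) * 'C(m.+1, i)%:R).
  by rewrite -e (mulKf ha).
rewrite -[_ *+ 'C(m, i)]mulr_natr -[_ *+ 'C(m.+1, i)]mulr_natr eC.
field.
by rewrite -mulrS ha.
Qed.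

Lemma beta_g1 N : (N < p)%N -> beta (ginv 1) N = - Hs 1 N.
Proof.
move=> hN.
pose one' := fun k : nat => ((k != 0%N)%:R : K).
rewrite (@beta_ext (ginv 1) (Mi one')); last first.
  move=> k _; rewrite /ginv /Mi /one' expr1; case: k => [|k] /=.
    by rewrite invr0 mulr0.
  by rewrite mulr1.
rewrite beta_Mi //.
rewrite /Hs -sumrN; apply: eq_bigr => [[m hm]] _ /=.
case: m hm => [|m] hm; first by rewrite invr0 mul0r /ginv invr0 expr1 oppr0.
have -> : beta one' m.+1 = -1.
  have hz : \sum_(k < m.+2) (-1)^+k *+ 'C(m.+1, k) = (0 : K).
    by rewrite -exprD1n addNr expr0n.
  rewrite /beta big_ord_recl /= /one' /= mulr0 add0r.
  move: hz; rewrite big_ord_recl /= expr0 bin0 mulr1n => /eqP.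
  rewrite addrC addr_eq0 => /eqP hS.
  by apply: (etrans _ hS); apply: eq_bigr => i _; rewrite mulr1.
by rewrite /ginv expr1 mulrN1.
Qed.

Lemma ginv_pow e k : ginv e k = ginv 1 k ^+ e.
Proof. by rewrite /ginv expr1. Qed.

Lemma Hs_prod n : \sum_(m < n.+1) ginv 1 m * Hs 3 m + \sum_(m < n.+1) ginv 3 m * Hs 1 m
  = Hs 1 n * Hs 3 n + Hs 4 n.
Proof.
elim: n => [|n IH].
  by rewrite /Hs !big_ord1 !ginv0 // !mul0r !addr0.
have HsS e : Hs e n.+1 = Hs e n + ginv e n.+1 by rewrite /Hs big_ord_recr.
rewrite [\sum_(m < n.+2) ginv 1 m * _]big_ord_recr [\sum_(m < n.+2) ginv 3 m * _]big_ord_recr /=.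
rewrite !HsS (ginv_pow 3 n.+1) (ginv_pow 4 n.+1) addrACA IH.
ring.
Qed.

Lemma BexprK0 : (7 <= p)%N -> Bexpr K (p - 3) = 0.
Proof.
move=> h7.
set n := (p - 3)%N.
have hn2 : (n.+2 = p.-1)%N by rewrite /n; lia.
have hev : odd n = false.
  case: (even_prime hp) => [hp2|hpo]; first by rewrite hp2 in h7.
  by rewrite /n oddB ?hpo // (leq_trans _ h7).
have gx : forall k : nat, ((k%:R : K))^+n = ginv 2 k.
  move=> k; rewrite /ginv inv_pow; last by lia.
  by congr (_ ^+ _); rewrite -hn2 subn2.
have hnp : (n.+2 < p)%N by rewrite hn2 prednK ?prime_gt0.
have S1 : Bexpr K n = \sum_(m < n.+1) ginv 2 m.+1 * beta (ginv 2) m.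
  rewrite /Bexpr; apply: eq_bigr => [[m hm]] _ /=.
  rewrite gx; congr (_ * _); apply: eq_bigr => [[j hj]] _ /=.
  by rewrite (exprNn (j%:R : K) n) -(signr_odd _ n) hev expr0 mul1r gx.
pose F N := ginv 2 N * beta (ginv 2) N - ginv 3 N * beta (ginv 1) N.
have S2 : Bexpr K n = \sum_(N < n.+2) F N.
  rewrite S1 [in RHS]big_ord_recl /F !ginv0 // !mul0r subr0 add0r.
  apply: eq_bigr => [[m hm]] _ /=.
  have b0 : bump 0 m = m.+1 by [].
  have hmp : (m.+1 < p)%N by apply: (leq_ltn_trans hm); apply: ltnW.
  rewrite b0 (@beta_pred (ginv 2) m hmp).
  have E1 : beta (fun j => j%:R * ginv 2 j) m.+1 = beta (ginv 1) m.+1.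
    apply: beta_ext => k _; rewrite /ginv; case: (eqVneq (k%:R : K) 0) => [->|hk].
      by rewrite mul0r invr0 expr0n.
    by rewrite expr2 mulrA mulfV // mul1r expr1.
  have E2 : ginv 2 m.+1 * m.+1%:R^-1 = ginv 3 m.+1.
    by rewrite (ginv_pow 2) (ginv_pow 3) -exprSr /ginv expr1.
  by rewrite E1 mulrBr mulrA E2.
have h1 : (0 < 1 < p.-1)%N by lia.
have h2 : (0 < 2 < p.-1)%N by lia.
have h4 : (0 < 4 < p.-1)%N by lia.
have Fl : F p.-1 = 0.
  rewrite /F !beta_last.
  have -> : \sum_(k < p.-1.+1) ginv 2 k = Hs 2 p.-1 by [].
  have -> : \sum_(k < p.-1.+1) ginv 1 k = Hs 1 p.-1 by [].
  by rewrite !psum_inv // !mulr0 subrr.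
have S3 : Bexpr K n = \sum_(N < p.-1.+1) F N.
  by rewrite big_ord_recr /= Fl addr0 S2 hn2.
have hpp : (p.-1 < p)%N by lia.
have A : \sum_(N < p.-1.+1) ginv 2 N * beta (ginv 2) N =
    \sum_(m < p.-1.+1) ginv 1 m * Hs 3 m.
  have -> : \sum_(N < p.-1.+1) ginv 2 N * beta (ginv 2) N =
      beta (Mi (Mi (beta (ginv 2)))) p.-1.
    rewrite beta_last; apply: eq_bigr => N _.
    by rewrite /Mi mulrA (ginv_pow 2) /ginv expr1 expr2.
  rewrite beta_Mi //; last by rewrite /Mi invr0 mul0r.
  apply: eq_bigr => [[m hm]] _ /=.
  have hmp : (m < p)%N by lia.
  rewrite beta_Mi //; last by rewrite /beta big_ord1 /= ginv0 // mulr0.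
  rewrite /Hs (ginv_pow 1 m) expr1 /ginv expr1; congr (_ * _).
  apply: eq_bigr => [[l hl]] _ /=.
  by rewrite beta_invol exprS expr1.
have B : \sum_(N < p.-1.+1) ginv 3 N * beta (ginv 1) N =
    - \sum_(m < p.-1.+1) ginv 3 m * Hs 1 m.
  rewrite -sumrN; apply: eq_bigr => [[N hN]] _ /=.
  by rewrite beta_g1 ?mulrN //; lia.
rewrite S3 /F sumrB A B opprK Hs_prod (@psum_inv 1 h1) (@psum_inv 4 h4).
by rewrite mul0r addr0.
Qed.

End Fp.


Lemma intr_Fp0 p (hp : prime p) (z : int) : (z%:~R : 'F_p) = 0 -> (p%:Z %| z)%Z.
Proof.
case: z => n.
  move=> /eqP h; rewrite /dvdz unfold_in /= (dvdn_pcharf (pchar_Fp hp)).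
  exact: h.
rewrite NegzE mulrNz => /eqP; rewrite oppr_eq0 => h.
rewrite /dvdz unfold_in /= (dvdn_pcharf (pchar_Fp hp)).
exact: h.
Qed.

Theorem theorem3p5 (p : nat) (hp : prime p) (h7 : (7 <= p)%N) :
  exists z : int, polyBernoulli (- (p%:Z) + 3) (p - 3)%N = ((p%:Z * z)%:~R : rat).
Proof.
have hk : - (p%:Z) + 3 = - Posz (p - 3)%N.
  by rewrite -subzn ?(leq_trans _ h7) // opprB addrC.
rewrite hk pB_eq.
set Z := Bexpr int (p - 3).
have eQ : Bexpr rat (p - 3) = Z%:~R.
  by rewrite /Z -(@Bexpr_map _ _ ( *~%R (1:rat) : {rmorphism int -> rat}) (p - 3)).
have eK : (Z%:~R : 'F_p) = 0.
  by rewrite /Z (@Bexpr_map _ _ ( *~%R (1:'F_p) : {rmorphism int -> 'F_p}) (p - 3)) BexprK0.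
have hd := @intr_Fp0 p hp Z eK.
exists (Z %/ p%:Z)%Z.
by rewrite eQ mulrC divzK.
Qed.
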